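(* Let $a_{01}^0(u)=64u^3\sin2u+48u^2\cos2u-44u\sin2u-4u\cos u\sin2u+3\cos2u-3\cos6u$ and let $F[a_{01}^0]=\inf\{u>0:a_{01}^0(u)=0\}$. Then $F[a_{01}^0]\in(\frac34\pi,\pi)$, and $a_{01}^0(u)<0$ for all $u\in(0,F[a_{01}^0])$. *)

(* Defs.v *)
From Stdlib Require Import Reals.
Open Scope R_scope.

Definition a010 (u : R) : R :=
  64 * u ^ 3 * sin (2 * u) + 48 * u ^ 2 * cos (2 * u) - 44 * u * sin (2 * u)
  - 4 * u * cos u * sin (2 * u) + 3 * cos (2 * u) - 3 * cos (6 * u).

Definition a010_pos_zeros (u : R) : Prop := 0 < u /\ a010 u = 0.

Definition is_infimum (S : R -> Prop) (m : R) : Prop :=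
  (forall x, S x -> m <= x) /\
  (forall m', (forall x, S x -> m' <= x) -> m' <= m).

(* Main.v *)
Require Import Defs.
From Stdlib Require Import Reals QArith Qreals Qround Lra Psatz Machin.
Open Scope R_scope.


Lemma a010_id u : a010 u = sin (2*u) * (64*u^3 - 44*u - 4*u*cos u) + 12 * cos (2*u) * (4*u^2 + sin (2*u) ^2).
Proof.
  unfold a010.
  replace (6*u) with (2*u + 2*(2*u)) by ring.
  rewrite cos_plus, (sin_2a (2*u)), (cos_2a_sin (2*u)). ring.
Qed.

Lemma convex_neg A B C s sL sH : 0 <= A -> sL <= s <= sH ->
  A*sL^2 + B*sL + C < 0 -> A*sH^2 + B*sH + C < 0 -> A*s^2+B*s+C < 0.
Proof.
  intros HA [H1 H2] HL HH.
  destruct (Req_dec sL sH) as [E|E].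
  - subst. assert (s = sH) by lra. subst. lra.
  - assert (Hd: 0 < sH - sL) by lra.
    assert (K: (sH - sL)*(A*s^2+B*s+C) = (sH-s)*(A*sL^2 + B*sL + C) + (s-sL)*(A*sH^2 + B*sH + C) - A*(s-sL)*(sH-s)*(sH-sL)) by ring.
    assert (0 <= A*(s-sL)*(sH-s)*(sH-sL)).
    { apply Rmult_le_pos; [|lra]. apply Rmult_le_pos; [|lra]. apply Rmult_le_pos; lra. }
    destruct (Req_dec s sH) as [E2|E2]; [subst; lra|].
    assert ((sH-s)*(A*sL^2 + B*sL + C) < 0).
    { apply Rmult_pos_neg; lra. }
    assert ((s-sL)*(A*sH^2 + B*sH + C) <= 0).
    { assert (0 <= s - sL) by lra; assert (0 <= -(A*sH^2 + B*sH + C)) by lra; assert (0 <= (s-sL)*(-(A*sH^2 + B*sH + C))) by (apply Rmult_le_pos; lra); lra. }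
    assert (Q: (sH - sL)*(A*s^2+B*s+C) < 0) by lra.
    destruct (Rle_or_lt 0 (A*s^2+B*s+C)) as [P|P]; [|exact P].
    assert (0 <= (sH - sL)*(A*s^2+B*s+C)) by (apply Rmult_le_pos; lra). lra.
Qed.

Lemma polyL y : 0 < y <= 9/4 -> -15/4 + 47/24*y - y^2/3 + y^3/72 < 0.
Proof. intros. nra. Qed.
Lemma polyH y : 0 < y <= 9/4 -> -15/4 + 47/24*y - 191/480*y^2 + 143/3600*y^3 - 13/7200*y^4 + 1/28800*y^5 < 0.
Proof. intros. nra. Qed.

Lemma PI_gt3 : 3 < PI.
Proof. pose proof PI2_3_2. lra. Qed.

Lemma sin_bnds x : 0 <= x <= PI -> x - x^3/6 <= sin x <= x - x^3/6 + x^5/120.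
Proof.
  intros [H1 H2]. destruct (sin_bound x 0 H1 H2) as [L U].
  unfold sin_approx, sin_term in L, U. simpl in L, U. split; lra.
Qed.

Lemma cos_bnds x : -PI/2 <= x <= PI/2 -> 1 - x^2/2 <= cos x <= 1 - x^2/2 + x^4/24.
Proof.
  intros [H1 H2]. destruct (cos_bound x 0 H1 H2) as [L U].
  unfold cos_approx, cos_term in L, U. simpl in L, U. split; lra.
Qed.

Lemma near0 u : 0 < u <= 3/4 -> a010 u < 0.
Proof.
  intros [H0 H1]. pose proof PI_gt3.
  rewrite a010_id.
  set (x := 2*u).
  destruct (sin_bnds x) as [sL sH]; [unfold x; lra|].
  destruct (cos_bnds x) as [cL cU]; [unfold x; lra|].
  destruct (cos_bnds u) as [hL hU]; [lra|].
  assert (Hs: 0 <= sin x) by (apply sin_ge_0; unfold x; lra).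
  set (s := sin x) in *. set (c := cos x) in *. set (ch := cos u) in *.
  set (CU := 1 - x^2/2 + x^4/24) in *.
  set (chL := 1 - u^2/2) in *.
  assert (E1: s * (64*u^3 - 44*u - 4*u*ch) <= s * (64*u^3 - 44*u - 4*u*chL)).
  { apply Rmult_le_compat_l; [lra|]. assert (0 <= u*(ch - chL)) by (apply Rmult_le_pos; lra). lra. }
  assert (E2: 12 * c * (4*u^2 + s^2) <= 12 * CU * (4*u^2 + s^2)).
  { assert (0 <= (CU - c) * (4*u^2+s^2)) by (apply Rmult_le_pos; nra). lra. }
  assert (HCU: 0 <= CU) by (unfold CU, x; nra).
  assert (Q: 12*CU*s^2 + (64*u^3 - 44*u - 4*u*chL)*s + 48*CU*u^2 < 0).
  { apply (convex_neg _ _ _ s (x - x^3/6) (x - x^3/6 + x^5/120)); [lra|lra| |].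
    - assert (Hy: 0 < x^2 <= 9/4) by (unfold x; split; nra).
      pose proof (polyL (x^2) Hy).
      assert (0 < x^4) by (apply pow_lt; unfold x; lra).
      replace (12 * CU * (x - x ^ 3 / 6) ^ 2 + (64 * u ^ 3 - 44 * u - 4 * u * chL) * (x - x ^ 3 / 6) + 48 * CU * u ^ 2)
        with (x^4 * (-15/4 + 47/24*x^2 - (x^2)^2/3 + (x^2)^3/72)) by (unfold CU, chL, x; field).
      nra.
    - assert (Hy: 0 < x^2 <= 9/4) by (unfold x; split; nra).
      pose proof (polyH (x^2) Hy).
      assert (0 < x^4) by (apply pow_lt; unfold x; lra).
      replace (12 * CU * (x - x ^ 3 / 6 + x^5/120) ^ 2 + (64 * u ^ 3 - 44 * u - 4 * u * chL) * (x - x ^ 3 / 6 + x^5/120) + 48 * CU * u ^ 2)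
        with (x^4 * (-15/4 + 47/24*x^2 - 191/480*(x^2)^2 + 143/3600*(x^2)^3 - 13/7200*(x^2)^4 + 1/28800*(x^2)^5)) by (unfold CU, chL, x; field).
      nra. }
  lra.
Qed.

Definition itv := (Q * Q)%type.
Definition inI (i : itv) (x : R) := Q2R (fst i) <= x <= Q2R (snd i).

Definition Dq : positive := 1048576%positive.
Definition rd (q : Q) : Q := Qmake (Qfloor (q * Qmake (Zpos Dq) 1)) Dq.
Definition ru (q : Q) : Q := Qopp (rd (Qopp q)).

Lemma rd_le q : Q2R (rd q) <= Q2R q.
Proof.
  pose proof (Qfloor_le (q * Qmake (Zpos Dq) 1)) as H.
  apply Qle_Rle in H. rewrite Q2R_mult in H.
  unfold rd. set (z := Qfloor (q * Qmake (Zpos Dq) 1)) in *.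
  assert (E1: Q2R (inject_Z z) = IZR z) by (unfold Q2R, inject_Z; simpl; field).
  assert (E2: Q2R (Qmake (Zpos Dq) 1) = IZR (Zpos Dq)) by (unfold Q2R; simpl; field).
  assert (E3: Q2R (Qmake z Dq) = IZR z / IZR (Zpos Dq)) by (unfold Q2R; simpl; reflexivity).
  rewrite E1, E2 in H. rewrite E3.
  assert (HD: 0 < IZR (Z.pos Dq)) by (apply IZR_lt; reflexivity).
  apply (Rmult_le_reg_r (IZR (Z.pos Dq))); [exact HD|].
  unfold Rdiv. rewrite Rmult_assoc, Rinv_l by lra. lra.
Qed.

Lemma ru_ge q : Q2R q <= Q2R (ru q).
Proof. unfold ru. rewrite Q2R_opp. pose proof (rd_le (-q)). rewrite Q2R_opp in H. lra. Qed.

Definition qmin (p q : Q) : Q := if Qle_bool p q then p else q.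
Definition qmax (p q : Q) : Q := if Qle_bool p q then q else p.

Lemma qmin_le p q : Q2R (qmin p q) <= Q2R p /\ Q2R (qmin p q) <= Q2R q.
Proof.
  unfold qmin. destruct (Qle_bool p q) eqn:E.
  - apply Qle_bool_iff in E. apply Qle_Rle in E. lra.
  - assert (~ (p <= q)%Q) by (intro H; apply Qle_bool_iff in H; congruence).
    apply Qnot_le_lt in H. apply Qlt_Rlt in H. lra.
Qed.
Lemma qmax_ge p q : Q2R p <= Q2R (qmax p q) /\ Q2R q <= Q2R (qmax p q).
Proof.
  unfold qmax. destruct (Qle_bool p q) eqn:E.
  - apply Qle_bool_iff in E. apply Qle_Rle in E. lra.
  - assert (~ (p <= q)%Q) by (intro H; apply Qle_bool_iff in H; congruence).
    apply Qnot_le_lt in H. apply Qlt_Rlt in H. lra.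
Qed.

Definition iadd (i j : itv) : itv := (rd (fst i + fst j), ru (snd i + snd j)).
Definition ineg (i : itv) : itv := (Qopp (snd i), Qopp (fst i)).
Definition isub (i j : itv) : itv := iadd i (ineg j).
Definition imul (i j : itv) : itv :=
  let a := fst i in let b := snd i in let c := fst j in let d := snd j in
  (rd (qmin (qmin (a*c) (a*d)) (qmin (b*c) (b*d))),
   ru (qmax (qmax (a*c) (a*d)) (qmax (b*c) (b*d)))).
Definition icst (q : Q) : itv := (q, q).

Lemma iadd_ok i j x y : inI i x -> inI j y -> inI (iadd i j) (x + y).
Proof.
  unfold inI, iadd; simpl; intros. pose proof (rd_le (fst i + fst j)). pose proof (ru_ge (snd i + snd j)).
  rewrite Q2R_plus in *. lra.
Qed.
Lemma ineg_ok i x : inI i x -> inI (ineg i) (- x).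
Proof. unfold inI, ineg; simpl; intros. rewrite !Q2R_opp. lra. Qed.
Lemma isub_ok i j x y : inI i x -> inI j y -> inI (isub i j) (x - y).
Proof. intros. unfold Rminus. apply iadd_ok; auto. apply ineg_ok; auto. Qed.

Lemma mul_lo a b c d x y m : a <= x <= b -> c <= y <= d ->
  m <= a*c -> m <= a*d -> m <= b*c -> m <= b*d -> m <= x*y.
Proof.
  intros. assert (H5: a*y <= x*y \/ b*y <= x*y) by (destruct (Rle_dec 0 y); [left|right]; nra).
  assert (H6: a*c <= a*y \/ a*d <= a*y) by (destruct (Rle_dec 0 a); [left|right]; nra).
  assert (H7: b*c <= b*y \/ b*d <= b*y) by (destruct (Rle_dec 0 b); [left|right]; nra).
  lra.
Qed.
Lemma mul_hi a b c d x y m : a <= x <= b -> c <= y <= d ->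
  a*c <= m -> a*d <= m -> b*c <= m -> b*d <= m -> x*y <= m.
Proof.
  intros. assert (H5: x*y <= a*y \/ x*y <= b*y) by (destruct (Rle_dec 0 y); [right|left]; nra).
  assert (H6: a*y <= a*c \/ a*y <= a*d) by (destruct (Rle_dec 0 a); [right|left]; nra).
  assert (H7: b*y <= b*c \/ b*y <= b*d) by (destruct (Rle_dec 0 b); [right|left]; nra).
  lra.
Qed.

Lemma imul_ok i j x y : inI i x -> inI j y -> inI (imul i j) (x * y).
Proof.
  unfold inI, imul; simpl; intros Hx Hy.
  set (a := fst i) in *. set (b := snd i) in *. set (c := fst j) in *. set (d := snd j) in *.
  split.
  - eapply Rle_trans; [apply rd_le|].
    destruct (qmin_le (qmin (a*c) (a*d)) (qmin (b*c) (b*d))) as [M1 M2].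
    destruct (qmin_le (a*c) (a*d)). destruct (qmin_le (b*c) (b*d)).
    rewrite !Q2R_mult in *.
    apply (mul_lo (Q2R a) (Q2R b) (Q2R c) (Q2R d)); auto; lra.
  - eapply Rle_trans; [|apply ru_ge].
    destruct (qmax_ge (qmax (a*c) (a*d)) (qmax (b*c) (b*d))) as [M1 M2].
    destruct (qmax_ge (a*c) (a*d)). destruct (qmax_ge (b*c) (b*d)).
    rewrite !Q2R_mult in *.
    apply (mul_hi (Q2R a) (Q2R b) (Q2R c) (Q2R d)); auto; lra.
Qed.

Lemma icst_ok q r : Q2R q = r -> inI (icst q) r.
Proof. intros <-. unfold inI, icst; simpl; lra. Qed.

Definition hq : Q := 1#40.
Definition st : itv := (0#1, 1#40).
Definition ct : itv := (3199#3200, 1#1).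
Definition sh : itv := (9599#384000, 307168001#12288000000).
Definition chh : itv := (3199#3200, 61420801#61440000).
Definition sh1 : itv := (9591#128000, 306912081#4096000000).
Definition ch1 : itv := (3191#3200, 20422427#20480000).

Definition rotS (Sx Cx s c : itv) : itv := iadd (imul Sx c) (imul Cx s).
Definition rotC (Sx Cx s c : itv) : itv := isub (imul Cx c) (imul Sx s).

Lemma rot_ok Sx Cx s c l t : inI Sx (sin l) -> inI Cx (cos l) -> inI s (sin t) -> inI c (cos t) ->
  inI (rotS Sx Cx s c) (sin (l + t)) /\ inI (rotC Sx Cx s c) (cos (l + t)).
Proof.
  intros. rewrite sin_plus, cos_plus. unfold rotS, rotC. split.
  - apply iadd_ok; apply imul_ok; auto.
  - apply isub_ok; apply imul_ok; auto.
Qed.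

Lemma st_ok t : 0 <= t <= 1/40 -> inI st (sin t) /\ inI ct (cos t).
Proof.
  intros Ht. pose proof PI_gt3.
  destruct (sin_bnds t) as [s1 s2]; [lra|].
  destruct (cos_bnds t) as [c1 c2]; [lra|].
  assert (0 <= sin t) by (apply sin_ge_0; lra).
  pose proof (COS_bound t).
  unfold inI, st, ct, Q2R; simpl. split; split; try nra.
Qed.

Lemma sh_ok : inI sh (sin (1/40)) /\ inI chh (cos (1/40)).
Proof.
  pose proof PI_gt3.
  destruct (sin_bnds (1/40)) as [s1 s2]; [lra|].
  destruct (cos_bnds (1/40)) as [c1 c2]; [lra|].
  unfold inI, sh, chh, Q2R; simpl. split; split; lra.
Qed.

Lemma sh1_ok : inI sh1 (sin (3/40)) /\ inI ch1 (cos (3/40)).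
Proof.
  pose proof PI_gt3.
  destruct (sin_bnds (3/40)) as [s1 s2]; [lra|].
  destruct (cos_bnds (3/40)) as [c1 c2]; [lra|].
  unfold inI, sh1, ch1, Q2R; simpl. split; split; lra.
Qed.

Definition evalA (U Sx Cx : itv) : itv :=
  let s2 := imul (icst 2) (imul Sx Cx) in
  let c2 := isub (icst 1) (imul (icst 2) (imul Sx Sx)) in
  let A := isub (isub (imul (icst 64) (imul (imul U U) U)) (imul (icst 44) U)) (imul (icst 4) (imul U Cx)) in
  iadd (imul s2 A) (imul (icst 12) (imul c2 (iadd (imul (icst 4) (imul U U)) (imul s2 s2)))).

Lemma a010_id2 u : a010 u = (2*(sin u*cos u)) * ((64*((u*u)*u) - 44*u) - 4*(u*cos u))
  + 12*((1 - 2*(sin u*sin u))*(4*(u*u) + (2*(sin u*cos u))*(2*(sin u*cos u)))).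
Proof. rewrite a010_id, sin_2a, cos_2a_sin. ring. Qed.

Lemma evalA_ok U Sx Cx u : inI U u -> inI Sx (sin u) -> inI Cx (cos u) -> inI (evalA U Sx Cx) (a010 u).
Proof.
  intros. rewrite a010_id2. unfold evalA.
  repeat match goal with
  | |- inI (isub _ _) _ => apply isub_ok
  | |- inI (iadd _ _) _ => apply iadd_ok
  | |- inI (imul _ _) _ => apply imul_ok
  | |- inI (icst _) _ => apply icst_ok; unfold Q2R; simpl; lra
  | |- inI _ _ => assumption
  end.
Qed.

Definition chk (l : Q) (Sx Cx : itv) : bool :=
  Qle_bool 0%Q l && negb (Qle_bool 0%Q (snd (evalA (l, (l + hq)%Q) (rotS Sx Cx st ct) (rotC Sx Cx st ct)))).

Lemma Q2R_h : Q2R hq = 1/40.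
Proof. unfold Q2R, hq; simpl. lra. Qed.

Lemma neg_of_itv (E : itv) (r : R) : Qle_bool 0%Q (snd E) = false -> inI E r -> r < 0.
Proof.
  intros H [_ K].
  assert (Hn: ~ (0%Q <= snd E)%Q) by (intro K'; apply Qle_bool_iff in K'; congruence).
  apply Qnot_le_lt, Qlt_Rlt in Hn. rewrite RMicromega.Q2R_0 in Hn.
  exact (Rle_lt_trans _ _ _ K Hn).
Qed.

Lemma chk_ok l Sx Cx : chk l Sx Cx = true -> inI Sx (sin (Q2R l)) -> inI Cx (cos (Q2R l)) ->
  forall u, Q2R l <= u <= Q2R l + 1/40 -> a010 u < 0.
Proof.
  intros H HS HC u Hl. unfold chk in H.
  apply andb_prop in H. destruct H as [_ H].
  apply Bool.negb_true_iff in H.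
  set (t := u - Q2R l).
  destruct (st_ok t) as [Hs Hc]; [abstract (unfold t; lra)|].
  destruct (rot_ok _ _ _ _ _ _ HS HC Hs Hc) as [R1 R2].
  replace (Q2R l + t) with u in R1, R2 by (abstract (unfold t; ring)).
  assert (HU: inI (l, (l + hq)%Q) u) by (abstract (unfold inI; simpl; rewrite Q2R_plus, Q2R_h; lra)).
  abstract (exact (neg_of_itv _ _ H (evalA_ok _ _ _ _ HU R1 R2))).
Qed.

Fixpoint run (n : nat) (l : Q) (Sx Cx : itv) : bool :=
  match n with
  | O => true
  | S n' => (chk l Sx Cx && run n' (Qred (l + hq)%Q) (rotS Sx Cx sh chh) (rotC Sx Cx sh chh))%bool
  end.

Lemma run_ok n : forall l Sx Cx, run n l Sx Cx = true -> inI Sx (sin (Q2R l)) -> inI Cx (cos (Q2R l)) ->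
  forall u, Q2R l <= u <= Q2R l + INR n / 40 -> (0 < n)%nat -> a010 u < 0.
Proof.
  induction n as [|n IH]; intros l Sx Cx H HS HC u Hl Hn; [lia|].
  cbn [run] in H. apply andb_prop in H. destruct H as [H1 H2].
  destruct (Rle_or_lt u (Q2R l + 1/40)) as [Hle|Hgt].
  - apply (chk_ok l Sx Cx H1 HS HC u). lra.
  - rewrite S_INR in Hl.
    destruct n as [|n']; [simpl in Hl; lra|].
    assert (El: Q2R (Qred (l + hq)%Q) = Q2R l + 1/40).
    { rewrite (Qeq_eqR _ _ (Qred_correct (l + hq)%Q)). rewrite Q2R_plus, Q2R_h. ring. }
    destruct (sh_ok) as [Ss Sc].
    destruct (rot_ok _ _ _ _ _ _ HS HC Ss Sc) as [R1 R2].
    rewrite <- El in R1, R2.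
    apply (IH _ _ _ H2 R1 R2 u); [rewrite El; lra | lia].
Qed.

Fixpoint it (n : nat) (Sx Cx : itv) : itv * itv :=
  match n with O => (Sx, Cx) | S n' => it n' (rotS Sx Cx sh1 ch1) (rotC Sx Cx sh1 ch1) end.

Lemma it_ok n : forall x Sx Cx, inI Sx (sin x) -> inI Cx (cos x) ->
  inI (fst (it n Sx Cx)) (sin (x + INR n * (3/40))) /\ inI (snd (it n Sx Cx)) (cos (x + INR n * (3/40))).
Proof.
  induction n as [|n IH]; intros x Sx Cx HS HC.
  - simpl. rewrite Rmult_0_l, Rplus_0_r. auto.
  - cbn [it]. destruct sh1_ok as [A B]. destruct (rot_ok _ _ _ _ _ _ HS HC A B) as [R1 R2].
    destruct (IH _ _ _ R1 R2) as [K1 K2].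
    rewrite S_INR. replace (x + (INR n + 1) * (3/40)) with (x + 3/40 + INR n * (3/40)) by ring. auto.
Qed.

Definition P0 := it 10 (icst 0) (icst 1).

Lemma run_true : run 88 (3#4) (fst P0) (snd P0) = true.
Proof. vm_compute. reflexivity. Qed.

Lemma mid u : 3/4 <= u <= 59/20 -> a010 u < 0.
Proof.
  intros [H1 H2].
  assert (Z0: Q2R 0 = 0) by (unfold Q2R; simpl; lra).
  assert (Z1: Q2R 1 = 1) by (unfold Q2R; simpl; lra).
  assert (Z34: Q2R (3#4) = 3/4) by (unfold Q2R; simpl; lra).
  destruct (it_ok 10 0 (icst 0) (icst 1)) as [A B].
  - unfold inI, icst, Q2R; simpl. rewrite sin_0. lra.
  - unfold inI, icst, Q2R; simpl. rewrite cos_0. lra.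
  - replace (0 + INR 10 * (3/40)) with (Q2R (3#4)) in A, B by (rewrite Z34; simpl; lra).
    change (it 10 (icst 0) (icst 1)) with P0 in A, B.
    apply (run_ok 88 (3#4) _ _ run_true A B).
    + rewrite Z34. split; [lra|].
      replace (INR 88) with 88 by (simpl; ring). lra.
    + lia.
Qed.

Lemma a010_cont : continuity a010.
Proof. unfold a010. reg. Qed.

Lemma PI_ub : PI <= 68/21.
Proof.
  destruct (PI_2_3_7_ineq 0) as [_ H]. unfold tg_alt, PI_2_3_7_tg, Ratan_seq in H. simpl in H. lra.
Qed.

Lemma a010_PI : 0 < a010 PI.
Proof.
  unfold a010. rewrite sin_2PI, cos_2PI.
  replace (6*PI) with (0 + 2 * INR 3 * PI) by (simpl; ring). rewrite cos_period, cos_0.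
  pose proof PI_gt3. nra.
Qed.

Lemma neg_until u : 0 < u <= 59/20 -> a010 u < 0.
Proof.
  intros [H1 H2]. destruct (Rle_or_lt u (3/4)).
  - apply near0; lra.
  - apply mid; lra.
Qed.

Theorem lemma5p3 :
  exists F : R,
    is_infimum a010_pos_zeros F /\
    3 * PI / 4 < F < PI /\
    (forall u : R, 0 < u < F -> a010 u < 0).
Proof.
  pose proof PI_gt3 as P3. pose proof PI_ub as P4.
  assert (Zgt: forall z, a010_pos_zeros z -> 59/20 < z).
  { intros z [Hz Ea]. destruct (Rle_or_lt z (59/20)) as [H|H]; [|exact H].
    pose proof (neg_until z (conj Hz H)). lra. }
  destruct (IVT a010 (59/20) PI a010_cont ltac:(lra) ltac:(apply neg_until; lra) a010_PI) as [z0 [[Hz1 Hz2] Ez0]].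
  assert (Hz0: a010_pos_zeros z0) by (split; [lra|exact Ez0]).
  assert (Hz0PI: z0 < PI).
  { destruct Hz2 as [H|H]; [exact H|]. subst z0. pose proof a010_PI. lra. }
  set (E := fun x => a010_pos_zeros (- x)).
  assert (Eb: bound E).
  { exists 0. intros x Ex. destruct Ex as [Hx _]. lra. }
  assert (Ene: exists x, E x).
  { exists (- z0). unfold E. rewrite Ropp_involutive. exact Hz0. }
  destruct (completeness E Eb Ene) as [m [Hub Hlub]].
  assert (Inf: is_infimum a010_pos_zeros (- m)).
  { split.
    - intros x Zx. assert (E (- x)) by (unfold E; rewrite Ropp_involutive; exact Zx).
      pose proof (Hub _ H). lra.
    - intros m' Hm'. assert (m <= - m').
      { apply Hlub. intros y Ey. pose proof (Hm' _ Ey). lra. }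
      lra. }
  destruct Inf as [Inf1 Inf2].
  assert (F1: 59/20 <= - m).
  { apply Inf2. intros x Zx. pose proof (Zgt x Zx). lra. }
  assert (F2: - m <= z0) by (apply Inf1; exact Hz0).
  exists (- m). split; [split; assumption|]. split; [split; lra|].
  intros u [Hu1 Hu2].
  destruct (Rle_or_lt u (59/20)) as [H|H]; [apply neg_until; lra|].
  destruct (Rlt_or_le (a010 u) 0) as [K|K]; [exact K|].
  exfalso. destruct K as [K|K].
  - destruct (IVT a010 (59/20) u a010_cont H ltac:(apply neg_until; lra) K) as [z [[Hz3 Hz4] Ez]].
    assert (a010_pos_zeros z) by (split; [lra|exact Ez]).
    pose proof (Inf1 _ H0). lra.
  - assert (a010_pos_zeros u) by (split; [lra|symmetry; exact K]).
    pose proof (Inf1 _ H0). lra.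
Qed.
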